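(* Let $A\in\mathbb{C}^{n\times n}$, let $\|\cdot\|$ be any vector norm on $\mathbb{C}^n$ with induced matrix norm, and let $y_0\in\mathbb{C}^n\setminus\{0\}$. Then $$\max_{\hat z_0\in\mathbb{C}^n,\ \|\hat z_0\|=1}\ \limsup_{t\to+\infty}\frac{K(t,y_0,\hat z_0)}{K(t,y_0)}=1 .$$ Moreover, if $y_0$ satisfies the RLGE condition, then, with $K_\infty(t,y_0,\hat z_0)=\|Q_1(t)\hat z_0\|/\|Q_1(t)\hat y_0\|$ and $K_\infty(t,y_0)=\|Q_1(t)\|/\|Q_1(t)\hat y_0\|$, $$\max_{\hat z_0\in\mathbb{C}^n,\ \|\hat z_0\|=1}\ \limsup_{t\to+\infty}\frac{K_\infty(t,y_0,\hat z_0)}{K_\infty(t,y_0)}=1 .$$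
   Context: $\hat y_0=y_0/\|y_0\|$; $K(t,y_0,\hat z_0)=\|e^{tA}\hat z_0\|/\|e^{tA}\hat y_0\|$ and $K(t,y_0)=\|e^{tA}\|/\|e^{tA}\hat y_0\|$. Let $\lambda_1,\dots,\lambda_p$ be the distinct eigenvalues of $A$, $\omega_i=\operatorname{Im}\lambda_i$. Fix a Jordan basis $v^{(i,j,k)}$ ($i\le p$, $j\le d_i$ with $d_i$ the geometric multiplicity, $k\le m_{ij}$) of Jordan chains: $(A-\lambda_iI)v^{(i,j,1)}=0$, $(A-\lambda_iI)v^{(i,j,k)}=v^{(i,j,k-1)}$ for $k\ge2$; $V$ the matrix of these columns in lexicographic order, $w^{(i,j,k)}$ the rows of $V^{-1}$; $\alpha_{ijk}(u)=w^{(i,j,k)}u$. $\Lambda_1$ is the set of eigenvalues of maximal real part, $M_1=\max_{\lambda_i\in\Lambda_1}\max_j m_{ij}$, $Q_1(t)=\sum_{\lambda_i\in\Lambda_1, m_{ij}=M_1}e^{\sqrt{-1}\omega_it}v^{(i,j,1)}w^{(i,j,M_1)}$. $u$ satisfies RLGE if $\alpha_{ijM_1}(u)\ne0$ for some $(i,j)$ with $\lambda_i\in\Lambda_1$, $m_{ij}=M_1$. *)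

(* Defs.v *)
From HB Require Import structures.
From mathcomp Require Import all_boot all_order all_algebra.
From mathcomp Require Import all_classical all_reals all_analysis.
From mathcomp.real_closed Require Import complex.
Import Order.TTheory GRing.Theory Num.Theory.
Import numFieldNormedType.Exports.

Set Implicit Arguments.
Unset Strict Implicit.
Unset Printing Implicit Defensive.

Local Open Scope ring_scope.
Local Open Scope classical_set_scope.

Definition cabs (R : realType) (c : R[i]) : R := ComplexField.Normc.normc c.

Definition cis (R : realType) (x : R) : R[i] := Complex (cos x) (sin x).

Definition expmx (R : realType) (n : nat) (A : 'M[R[i]]_n) : 'M[R[i]]_n :=
  limn (fun N => \sum_(k < N) (k`!%:R^-1 *: A ^+ k)).

Definition etA (R : realType) (n : nat) (A : 'M[R[i]]_n) (t : R) : 'M[R[i]]_n :=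
  expmx (Complex t 0 *: A).

Definition is_vnorm (R : realType) (n : nat) (N : 'cV[R[i]]_n -> R) : Prop :=
  [/\ (forall x, 0 <= N x),
      (forall x, N x = 0 -> x = 0),
      (forall (c : R[i]) x, N (c *: x) = cabs c * N x)
    & (forall x y, N (x + y) <= N x + N y)].

Definition opnorm (R : realType) (n : nat) (N : 'cV[R[i]]_n -> R)
    (M : 'M[R[i]]_n) : R :=
  sup [set N (M *m x) | x in [set x | N x = 1]].

Definition nhat (R : realType) (n : nat) (N : 'cV[R[i]]_n -> R) (y : 'cV[R[i]]_n)
  : 'cV[R[i]]_n := Complex (N y)^-1 0 *: y.

Definition K3 (R : realType) (n : nat) (N : 'cV[R[i]]_n -> R) (A : 'M[R[i]]_n)
    (y0 z0 : 'cV[R[i]]_n) (t : R) : R :=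
  N (etA A t *m z0) / N (etA A t *m nhat N y0).
Definition K2 (R : realType) (n : nat) (N : 'cV[R[i]]_n -> R) (A : 'M[R[i]]_n)
    (y0 : 'cV[R[i]]_n) (t : R) : R :=
  opnorm N (etA A t) / N (etA A t *m nhat N y0).

Definition limsup_pinfty (R : realType) (f : R -> R) : \bar R :=
  limf_esup (fun t => (f t)%:E) +oo%R.

Definition max_limsup_eq1 (R : realType) (n : nat) (N : 'cV[R[i]]_n -> R)
    (F : 'cV[R[i]]_n -> R -> R) : Prop :=
  (forall z, N z = 1 -> (limsup_pinfty (F z) <= 1%:E)%E) /\
  (exists z, N z = 1 /\ limsup_pinfty (F z) = 1%:E).

(* Jordan basis data, 0-indexed: eigenvalue index i : 'I_p, chain index j < d i,
   position k < m i j in the chain; v i j k = v^{(i,j,k+1)} and w i j k = w^{(i,j,k+1)},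
   the rows of V^{-1} (characterized as the dual basis of the v's, which form a basis
   of C^n since there are n of them and they are biorthogonal to the w's). *)
Definition jordan_basis (R : realType) (n : nat) (A : 'M[R[i]]_n) (p : nat)
    (lam : 'I_p -> R[i]) (d : 'I_p -> nat) (m : 'I_p -> nat -> nat)
    (v : 'I_p -> nat -> nat -> 'cV[R[i]]_n) (w : 'I_p -> nat -> nat -> 'rV[R[i]]_n)
  : Prop :=
  [/\ injective lam,
      (forall i, (0 < d i)%N),
      (forall i j, (j < d i)%N -> (0 < m i j)%N),
      (forall i j, (j < d i)%N -> (A - (lam i)%:M) *m v i j 0%N = 0)
    & (forall i j k, (j < d i)%N -> (0 < k < m i j)%N ->
          (A - (lam i)%:M) *m v i j k = v i j k.-1)] /\
  (\sum_(i < p) \sum_(j < d i) m i j)%N = n /\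
  (forall i j k i' j' k', (j < d i)%N -> (k < m i j)%N ->
          (j' < d i')%N -> (k' < m i' j')%N ->
          w i j k *m v i' j' k' = ((i == i') && (j == j') && (k == k'))%:R%:M).

Definition inL1 (R : realType) (p : nat) (lam : 'I_p -> R[i]) (i : 'I_p) : bool :=
  [forall k : 'I_p, complex.Re (lam k) <= complex.Re (lam i)].

Definition M1 (R : realType) (p : nat) (lam : 'I_p -> R[i]) (d : 'I_p -> nat)
    (m : 'I_p -> nat -> nat) : nat :=
  (\max_(i < p | inL1 lam i) \max_(j < d i) m i j)%N.

Definition Q1 (R : realType) (n p : nat) (lam : 'I_p -> R[i]) (d : 'I_p -> nat)
    (m : 'I_p -> nat -> nat) (v : 'I_p -> nat -> nat -> 'cV[R[i]]_n)
    (w : 'I_p -> nat -> nat -> 'rV[R[i]]_n) (t : R) : 'M[R[i]]_n :=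
  \sum_(i < p | inL1 lam i) \sum_(j < d i | m i j == M1 lam d m)
     cis (complex.Im (lam i) * t) *: (v i j 0%N *m w i j (M1 lam d m).-1).

(* RLGE condition on u: alpha_{i j M1}(u) <> 0 for some (i,j) with lam i in Lambda_1
   and m i j = M1 *)
Definition RLGE (R : realType) (n p : nat) (lam : 'I_p -> R[i]) (d : 'I_p -> nat)
    (m : 'I_p -> nat -> nat) (w : 'I_p -> nat -> nat -> 'rV[R[i]]_n)
    (u : 'cV[R[i]]_n) : Prop :=
  exists (i : 'I_p) (j : nat), [/\ inL1 lam i, (j < d i)%N, m i j = M1 lam d m
    & w i j (M1 lam d m).-1 *m u != 0].

Definition Kinf3 (R : realType) (n : nat) (N : 'cV[R[i]]_n -> R) (Q : R -> 'M[R[i]]_n)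
    (y0 z0 : 'cV[R[i]]_n) (t : R) : R :=
  N (Q t *m z0) / N (Q t *m nhat N y0).
Definition Kinf2 (R : realType) (n : nat) (N : 'cV[R[i]]_n -> R) (Q : R -> 'M[R[i]]_n)
    (y0 : 'cV[R[i]]_n) (t : R) : R :=
  opnorm N (Q t) / N (Q t *m nhat N y0).

(* Main.v *)
Require Import Defs.
From HB Require Import structures.
From mathcomp Require Import all_boot all_order all_algebra.
From mathcomp Require Import all_classical all_reals all_analysis.
From mathcomp.real_closed Require Import complex.
Import Order.TTheory GRing.Theory Num.Theory.
Import numFieldNormedType.Exports.
Local Open Scope ring_scope.
From mathcomp Require Import lra ring.
Section Cabs.
Context {R : realType}.
Implicit Types (c d : R[i]).

Lemma cabs_ge0 c : 0 <= cabs c.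
Proof. by case: c => a b; rewrite /cabs /= sqrtr_ge0. Qed.

Lemma cabsM c d : cabs (c * d) = cabs c * cabs d.
Proof. exact: ComplexField.Normc.normcM. Qed.

Lemma cabsD c d : cabs (c + d) <= cabs c + cabs d.
Proof. exact: le_normcD. Qed.

Lemma cabsN c : cabs (- c) = cabs c.
Proof. exact: normcN. Qed.

Lemma cabs0 : cabs (0 : R[i]) = 0.
Proof. exact: ComplexField.Normc.normc0. Qed.

Lemma cabs1 : cabs (1 : R[i]) = 1.
Proof. exact: ComplexField.Normc.normc1. Qed.

Lemma cabs_eq0 c : cabs c = 0 -> c = 0.
Proof. exact: ComplexField.Normc.eq0_normc. Qed.

Lemma cabs_real (r : R) : cabs (Complex r 0) = `|r|.
Proof. by rewrite /cabs /= expr0n /= addr0 sqrtr_sqr. Qed.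

Lemma cabs_Re c : `|complex.Re c| <= cabs c.
Proof.
case: c => a b; rewrite /cabs /=.
rewrite -(sqrtr_sqr a); apply: ler_wsqrtr.
by rewrite lerDl sqr_ge0.
Qed.

Lemma cabs_Im c : `|complex.Im c| <= cabs c.
Proof.
case: c => a b; rewrite /cabs /=.
rewrite -(sqrtr_sqr b); apply: ler_wsqrtr.
by rewrite lerDr sqr_ge0.
Qed.

Lemma cabs_le_ReIm c : cabs c <= `|complex.Re c| + `|complex.Im c|.
Proof.
case: c => a b; rewrite /cabs /=.
have h : 0 <= `|a| + `|b| by apply: addr_ge0.
rewrite -(ger0_norm h) -sqrtr_sqr; apply: ler_wsqrtr.
rewrite sqrrD -(real_normK (num_real a)) -(real_normK (num_real b)).
have h2 : 0 <= `|a| * `|b| *+ 2 by apply: mulrn_wge0; apply: mulr_ge0.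
by rewrite -addrA [_ *+ 2 + _]addrC addrA lerDl.
Qed.

Lemma cabs_sum (I : Type) (s : seq I) (P : pred I) (f : I -> R[i]) :
  cabs (\sum_(i <- s | P i) f i) <= \sum_(i <- s | P i) cabs (f i).
Proof.
elim/big_rec2: _ => [|i x y _ H]; first by rewrite cabs0.
exact: le_trans (cabsD _ _) (lerD (lexx _) H).
Qed.

Lemma cabsB c d : cabs (c - d) = cabs (d - c).
Proof. by rewrite -cabsN opprB. Qed.

End Cabs.

Local Open Scope classical_set_scope.
Section Cluster.
Variable R : realType.

Lemma cluster_cV n (T : Type) (F : set_system T) (FF : ProperFilter F)
   (f : T -> 'cV[R[i]]_n) (B : R) :
  (forall t i, cabs (f t i 0) <= B) ->
  exists p : 'cV[R[i]]_n, forall e, 0 < e -> forall U, F U ->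
     exists2 t, U t & forall i, cabs (f t i 0 - p i 0) < e.
Proof.
move=> fB.
pose r (v : 'cV[R[i]]_n) : 'rV[R]_(n + n) :=
  row_mx (\row_i complex.Re (v i 0)) (\row_i complex.Im (v i 0)).
pose A := [set v : 'rV[R]_(n + n) | forall j, `[- B, B]%classic (v ord0 j)].
have cA : compact A.
  by apply: (@rV_compact _ _ (fun=> `[- B, B]%classic)) => j; exact: segment_compact.
have FA : F (fun t => A (r (f t))).
  apply: filterE => t j /=.
  rewrite /= in_itv /=; rewrite -ler_norml.
  rewrite -(fintype.splitK j); case: (fintype.split j) => k /=.
  - rewrite row_mxEl mxE.
    exact: (le_trans (cabs_Re _) (fB t k)).
  - rewrite row_mxEr mxE.
    exact: (le_trans (cabs_Im _) (fB t k)).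
have [q [_ cq]] := cA ((r \o f) @ F) _ FA.
exists (\col_i Complex (q ord0 (lshift n i)) (q ord0 (rshift n i))).
move=> e e0 U FU.
have e20 : 0 < e / 2 by rewrite divr_gt0.
have Fim : F (fun t => ((r \o f) @` U) (r (f t))).
  by apply: filterS FU => t Ut; exists t.
have [w [[t Ut <-] bw]] := cq _ _ Fim (nbhsx_ballx q _ e20).
exists t => // i.
move: bw => [_ bw].
have h1 := bw ord0 (lshift n i); have h2 := bw ord0 (rshift n i).
rewrite /ball /= in h1 h2.
rewrite /r /= row_mxEl mxE in h1.
rewrite /r /= row_mxEr mxE in h2.
rewrite mxE; apply: le_lt_trans (cabs_le_ReIm _) _.
move: (f t i 0) h1 h2 => [a b] /= h1 h2.
rewrite (splitr e) ltrD //.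
  by rewrite distrC.
by rewrite distrC.
Qed.

End Cluster.

Local Open Scope classical_set_scope.
Section VNorm.
Context {R : realType} {n : nat} (N : 'cV[R[i]]_n -> R) (hN : is_vnorm N).

Lemma vn_ge0 x : 0 <= N x. Proof. by case: hN. Qed.
Lemma vn_eq0 x : N x = 0 -> x = 0. Proof. by case: hN => _ h _ _; apply: h. Qed.
Lemma vnZ c x : N (c *: x) = cabs c * N x. Proof. by case: hN => _ _ h _; apply: h. Qed.
Lemma vnD x y : N (x + y) <= N x + N y. Proof. by case: hN => _ _ _ h; apply: h. Qed.

Lemma vn0 : N 0 = 0.
Proof. by rewrite -(scale0r (0 : 'cV[R[i]]_n)) vnZ cabs0 mul0r. Qed.

Lemma vnN x : N (- x) = N x.
Proof. by rewrite -scaleN1r vnZ cabsN cabs1 mul1r. Qed.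

Lemma vnB x y : N (x - y) = N (y - x).
Proof. by rewrite -vnN opprB. Qed.

Lemma vn_lip x y : N x - N y <= N (x - y).
Proof.
rewrite lerBlDr; apply: le_trans (vnD _ _); by rewrite subrK.
Qed.

Lemma vn_sum (I : Type) (s : seq I) (P : pred I) (f : I -> 'cV[R[i]]_n) :
  N (\sum_(i <- s | P i) f i) <= \sum_(i <- s | P i) N (f i).
Proof.
elim/big_rec2: _ => [|i x y _ H]; first by rewrite vn0.
exact: le_trans (vnD _ _) (lerD (lexx _) H).
Qed.

Definition Cn := \sum_(i < n) N (delta_mx i (0 : 'I_1)).

Lemma Cn_ge0 : 0 <= Cn.
Proof. by apply: sumr_ge0 => i _; apply: vn_ge0. Qed.

Lemma vn_up x : N x <= \sum_(i < n) cabs (x i 0) * N (delta_mx i (0 : 'I_1)).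
Proof.
rewrite {1}(matrix_sum_delta x).
apply: le_trans; first exact: vn_sum.
apply: ler_sum => i _ /=.
by rewrite big_ord1 vnZ.
Qed.

Lemma vn_small (x : 'cV[R[i]]_n) (e : R) : (forall i, cabs (x i 0) <= e) -> N x <= e * Cn.
Proof.
move=> h; apply: le_trans (vn_up x) _; rewrite /Cn mulr_sumr.
apply: ler_sum => i _; apply: ler_wpM2r; [exact: vn_ge0 | exact: h].
Qed.

Definition s1 (x : 'cV[R[i]]_n) := \sum_(i < n) cabs (x i 0).

Lemma s1_ge0 x : 0 <= s1 x.
Proof. by apply: sumr_ge0 => i _; apply: cabs_ge0. Qed.

Lemma cabs_le_s1 (x : 'cV[R[i]]_n) (i : 'I_n) : cabs (x i 0) <= s1 x.
Proof.
rewrite /s1 (bigD1 i) //= lerDl; apply: sumr_ge0 => j _; exact: cabs_ge0.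
Qed.

Lemma s1Z (r : R) x : s1 (Complex r 0 *: x) = `|r| * s1 x.
Proof.
rewrite /s1 mulr_sumr; apply: eq_bigr => i _.
by rewrite mxE cabsM cabs_real.
Qed.

Lemma vn_low : exists2 b, 0 < b & forall x, s1 x <= b * N x.
Proof.
have [//|H] := pselect (exists2 b, 0 < b & forall x, s1 x <= b * N x).
exfalso.
have tp : forall t : R, 0 < `|t| + 1 by move=> t; apply: ltr_wpDl.
have hy : forall t : R, exists y, s1 y = 1 /\ N y <= (`|t| + 1)^-1.
  move=> t.
  have b0 : 0 < `|t| + 1 by apply: ltr_wpDl.
  have /existsNP [x hx] : ~ forall x, s1 x <= (`|t| + 1) * N x.
    by move=> h; apply: H; exists (`|t| + 1).
  move/negP: hx; rewrite -ltNge => hx.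
  have s0 : 0 < s1 x by apply: le_lt_trans hx; apply: mulr_ge0; [exact: ltW|exact: vn_ge0].
  exists (Complex (s1 x)^-1 0 *: x); split.
    by rewrite s1Z ger0_norm ?invr_ge0 ?(ltW s0) // mulVf // gt_eqF.
  rewrite vnZ cabs_real ger0_norm ?invr_ge0 ?(ltW s0) //.
  rewrite -(ler_pM2l s0) mulrA mulfV ?gt_eqF // mul1r.
  rewrite -(ler_pM2r b0) -mulrA mulVf ?gt_eqF // mulr1 mulrC; exact: ltW.
pose y t := projT1 (cid (hy t)).
have yP t : s1 (y t) = 1 /\ N (y t) <= (`|t| + 1)^-1 := projT2 (cid (hy t)).
have yB : forall t i, cabs (y t i 0) <= 1.
  by move=> t i; rewrite -(yP t).1; exact: cabs_le_s1.
have [p hp] := @cluster_cV R n R (pinfty_nbhs R) _ y 1 yB.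
have Np0 : N p = 0.
  apply/eqP; rewrite eq_le vn_ge0 andbT leNgt; apply/negP => Np.
  set d := N p / 2.
  have d0 : 0 < d by rewrite divr_gt0.
  pose e := d / (Cn + 1).
  have C1 : 0 < Cn + 1 by apply: ltr_wpDl; [exact: Cn_ge0|].
  have e0 : 0 < e by rewrite divr_gt0.
  have [t tU ht] : exists2 t, (d^-1 < t) & forall i, cabs (y t i 0 - p i 0) < e.
    apply: hp => //; exists d^-1; split => //; exact: num_real.
  have h1 : N (p - y t) <= e * Cn.
    apply: vn_small => i; rewrite mxE !mxE cabsB; exact: ltW.
  have h2 : N (y t) <= d.
    apply: le_trans (yP t).2 _.
    rewrite -(invrK d) lef_pV2 ?posrE ?tp ?invr_gt0 //.
    apply: le_trans (ltW tU) _; rewrite ler_wpDr //; exact: ler_norm.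
  have h3 : N p <= d + e * Cn.
    have := vn_lip p (y t); rewrite lerBlDr => h; apply: le_trans h _.
    by rewrite addrC lerD.
  have h4 : e * Cn < d.
    by rewrite /e mulrAC ltr_pdivrMr // ltr_pM2l // ltrDl.
  have : N p < N p by apply: le_lt_trans h3 _; rewrite [X in _ < X](splitr (N p)) -/d ltrD2l.
  by rewrite ltxx.
have p0 := vn_eq0 _ Np0.
pose e := (n%:R + 1)^-1 : R.
have e0 : 0 < e by rewrite invr_gt0 ltr_wpDl.
have [t _ ht] : exists2 t, setT t & forall i, cabs (y t i 0 - p i 0) < e.
  by apply: hp => //; apply: filterT.
have : s1 (y t) <= n%:R * e.
  rewrite /s1 -[n in n%:R]card_ord -sum1_card natr_sum mulr_suml.
  apply: ler_sum => i _; rewrite mul1r; have := ht i.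
  by rewrite p0 mxE subr0 => /ltW.
rewrite (yP t).1 /e ler_pdivlMr ?ltr_wpDl // mul1r.
by rewrite gerDl ler10.
Qed.

End VNorm.

Arguments vn_ge0 {R n N} hN x.
Arguments vn_eq0 {R n N} hN x.
Arguments vnZ {R n N} hN c x.
Arguments vnD {R n N} hN x y.
Arguments vn0 {R n N} hN.
Arguments vnN {R n N} hN x.
Arguments vnB {R n N} hN x y.
Arguments vn_lip {R n N} hN x y.
Arguments vn_sum {R n N} hN {I} s P f.
Arguments Cn {R n} N.
Arguments Cn_ge0 {R n N} hN.
Arguments vn_up {R n N} hN x.
Arguments vn_small {R n N} hN x e.
Arguments vn_low {R n N} hN.

Local Open Scope classical_set_scope.

Lemma small0 {R : realType} (a K : R) : 0 <= K ->
  (forall e, 0 < e -> a <= e * K) -> a <= 0.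
Proof.
move=> K0 h; rewrite leNgt; apply/negP => a0.
have K1 : 0 < K + 1 by apply: ltr_wpDl.
have := h (a / (K + 1)) (divr_gt0 a0 K1).
rewrite mulrAC ler_pdivlMr // ler_pM2l // => /(le_trans (lexx _)).
by rewrite gerDl ler10.
Qed.

Section OpNorm.
Context {R : realType} {n : nat} (N : 'cV[R[i]]_n -> R) (hN : is_vnorm N).

Lemma Mx_bound (M : 'M[R[i]]_n) : exists B, forall x, N (M *m x) <= B * N x.
Proof.
have [b b0 hb] := vn_low hN.
pose K := \sum_(i < n) (\sum_(j < n) cabs (M i j)) * N (delta_mx i (0 : 'I_1)).
exists (K * b) => x.
apply: le_trans (vn_up hN _) _.
apply: (@le_trans _ _ (K * s1 x)); last first.
  rewrite -mulrA ler_wpM2l //.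
  by apply: sumr_ge0 => i _; apply: mulr_ge0; [apply: sumr_ge0 => j _; apply: cabs_ge0 | apply: vn_ge0].
rewrite /K mulr_suml; apply: ler_sum => i _.
rewrite mulrAC; apply: ler_wpM2r; first exact: vn_ge0.
rewrite mxE mulr_suml; apply: le_trans; first exact: cabs_sum.
apply: ler_sum => j _; rewrite cabsM; apply: ler_wpM2l; first exact: cabs_ge0.
exact: cabs_le_s1.
Qed.

Variable u : 'cV[R[i]]_n.
Hypothesis hu : N u = 1.

Lemma opnorm_has_sup M : has_sup [set N (M *m x) | x in [set x | N x = 1]].
Proof.
split; first by exists (N (M *m u)); exists u.
have [B hB] := Mx_bound M.
exists B => _ [x /= x1 <-]; by rewrite -[B]mulr1 -x1.
Qed.

Lemma opnorm_ub M x : N x = 1 -> N (M *m x) <= opnorm N M.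
Proof.
move=> x1; apply: (sup_upper_bound (opnorm_has_sup M)); by exists x.
Qed.

Lemma opnorm_ge0 M : 0 <= opnorm N M.
Proof. apply: le_trans (opnorm_ub M u hu); exact: vn_ge0. Qed.

Lemma opnorm_le M x : N (M *m x) <= opnorm N M * N x.
Proof.
have [->|x0] := eqVneq x 0.
  by rewrite mulmx0 !(vn0 hN) mulr0.
have Nx : 0 < N x.
  rewrite lt0r (vn_ge0 hN) andbT; apply: contra x0 => /eqP h.
  by rewrite (vn_eq0 hN _ h).
pose c := Complex (N x)^-1 0.
have h1 : N (c *: x) = 1 by rewrite (vnZ hN) /c cabs_real ger0_norm ?invr_ge0 ?(ltW Nx) // mulVf // gt_eqF.
have := opnorm_ub M _ h1.
rewrite -scalemxAr (vnZ hN) /c cabs_real ger0_norm ?invr_ge0 ?(ltW Nx) //.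
by rewrite mulrC ler_pdivrMr.
Qed.

Lemma opnorm_adh M e : 0 < e -> exists x, N x = 1 /\ opnorm N M - e < N (M *m x).
Proof.
move=> e0; have [_ [x /= x1 <-] h] := sup_adherent e0 (opnorm_has_sup M).
by exists x.
Qed.

End OpNorm.

Local Open Scope classical_set_scope.
Arguments Mx_bound {R n N} hN M.
Arguments opnorm_has_sup {R n N} hN {u} hu M.
Arguments opnorm_ub {R n N} hN {u} hu M x.
Arguments opnorm_ge0 {R n N} hN {u} hu M.
Arguments opnorm_le {R n N} hN {u} hu M x.
Arguments opnorm_adh {R n N} hN {u} hu M e.

Theorem abstract_main {R : realType} {n : nat} (N : 'cV[R[i]]_n -> R)
  (hN : is_vnorm N) (y0 : 'cV[R[i]]_n) (Mt : R -> 'M[R[i]]_n) :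
  y0 != 0 -> (forall t, Mt t *m y0 != 0) ->
  max_limsup_eq1 N (fun z t => (N (Mt t *m z) / N (Mt t *m nhat N y0))
                    / (opnorm N (Mt t) / N (Mt t *m nhat N y0))).
Proof.
move=> y00 hM.
have Npos : forall v, v != 0 -> 0 < N v.
  move=> v v0; rewrite lt0r (vn_ge0 hN) andbT; apply: contra v0 => /eqP h.
  by rewrite (vn_eq0 hN _ h).
have Ny0 := Npos _ y00.
set u := nhat N y0.
have hu : N u = 1.
  by rewrite /u /nhat (vnZ hN) cabs_real ger0_norm ?invr_ge0 ?(ltW Ny0) // mulVf // gt_eqF.
have bpos : forall t, 0 < N (Mt t *m u).
  move=> t; rewrite /u /nhat -scalemxAr (vnZ hN) cabs_real ger0_norm ?invr_ge0 ?(ltW Ny0) //.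
  by apply: mulr_gt0; [rewrite invr_gt0 | exact: Npos].
have oppos : forall t, 0 < opnorm N (Mt t).
  move=> t; apply: lt_le_trans (bpos t) _.
  by have := opnorm_le hN hu (Mt t) u; rewrite hu mulr1.
set f := fun z t => _.
have ratioE : forall z t, f z t = N (Mt t *m z) / opnorm N (Mt t).
  move=> z t; rewrite /f; have b0 := bpos t; have o0 := oppos t.
  by rewrite invf_div mulrA divfK ?gt_eqF.
have rle : forall z t, N z = 1 -> f z t <= 1.
  move=> z t z1; rewrite ratioE ler_pdivrMr ?oppos // mul1r.
  exact: (opnorm_ub hN hu (Mt t) z z1).
have part1 : forall z, N z = 1 -> (limsup_pinfty (f z) <= 1%:E)%E.
  move=> z z1; rewrite /limsup_pinfty /limf_esup.
  apply: ge_ereal_inf; exists (ereal_sup [set (f z x)%:E | x in setT]).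
    by exists setT => //; exact: filterT.
  apply: ge_ereal_sup => _ [t _ <-]; rewrite lee_fin; exact: rle.
split => //.
pose d := fun t : R => (`|t| + 1)^-1.
have tp : forall t : R, 0 < `|t| + 1 by move=> t; apply: ltr_wpDl.
have hx : forall t, exists x, N x = 1 /\
    opnorm N (Mt t) * (1 - d t) < N (Mt t *m x).
  move=> t.
  have e0 : 0 < opnorm N (Mt t) * d t by apply: mulr_gt0; [exact: oppos | rewrite invr_gt0].
  have [x [x1 hx]] := opnorm_adh hN hu (Mt t) _ e0.
  by exists x; split => //; rewrite mulrBr mulr1.
pose x t := projT1 (cid (hx t)).
have xP t : N (x t) = 1 /\ opnorm N (Mt t) * (1 - d t) < N (Mt t *m x t)
  := projT2 (cid (hx t)).
have [b b0 hb] := vn_low hN.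
have xB : forall t i, cabs (x t i 0) <= b.
  move=> t i; apply: le_trans (cabs_le_s1 _ _) _.
  by apply: le_trans (hb _) _; rewrite (xP t).1 mulr1.
have [p hp] := @cluster_cV R n R (pinfty_nbhs R) _ x b xB.
have Cn0 := Cn_ge0 hN.
have close : forall e, 0 < e -> forall U, pinfty_nbhs R U ->
    exists2 t, U t & N (x t - p) <= e.
  move=> e e0 U FU.
  have C1 : 0 < Cn N + 1 by apply: ltr_wpDl.
  pose e' := e / (Cn N + 1).
  have e'0 : 0 < e' by rewrite divr_gt0.
  have [t Ut ht] := hp e' e'0 U FU.
  exists t => //.
  apply: le_trans (vn_small hN _ e' _) _.
    by move=> i; rewrite !mxE; apply: ltW.
  rewrite /e' mulrAC ler_pdivrMr // ler_pM2l // lerDl //.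
have Np1 : N p = 1.
  have : `|N p - 1| <= 0.
    apply: (@small0 R _ 1) => // e e0; rewrite mulr1.
    have [t _ ht] := close e e0 setT filterT.
    rewrite -(xP t).1 ler_norml; apply/andP; split.
      rewrite lerNl opprB; apply: le_trans (vn_lip hN _ _) _; exact: ht.
    by apply: le_trans (vn_lip hN _ _) _; rewrite (vnB hN).
  by rewrite normr_le0 subr_eq0 => /eqP.
exists p; split => //.
apply/eqP; rewrite eq_le part1 //=.
rewrite /limsup_pinfty /limf_esup; apply: le_ereal_inf_tmp => _ [V FV <-].
apply/lee_subgt0Pr => e e0.
have [M0 [M0r hM0]] := FV.
have e2 : 0 < e / 2 by rewrite divr_gt0.
pose U := fun t : R => Num.max M0 (2 / e) < t.
have FU : pinfty_nbhs R U.
  exists (Num.max M0 (2 / e)); split => //.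
  by rewrite realE; apply/orP; left; rewrite le_max (divr_ge0 _ (ltW e0)) ?orbT.
have [t Ut ht] := close (e / 2) e2 U FU.
move: Ut; rewrite /U gt_max => /andP [tM te].
apply: le_ereal_sup_tmp; exists (f p t)%:E; first by exists t => //; exact: hM0.
rewrite -EFinB lee_fin ratioE.
have o0 := oppos t.
rewrite ler_pdivlMr //.
have t0 : 0 < t by apply: lt_trans te; rewrite divr_gt0.
have dle : d t <= e / 2.
  rewrite /d -(invrK (e / 2)) lef_pV2 ?posrE ?invr_gt0 ?tp //.
  rewrite invf_div; apply: le_trans (ltW te) _.
  by rewrite gtr0_norm // lerDl.
have A := (xP t).2.
have B := opnorm_le hN hu (Mt t) (x t - p).
have C := vn_lip hN (Mt t *m x t) (Mt t *m p).
rewrite -mulmxBr in C.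
set op := opnorm N (Mt t) in A B o0 *.
set a := N (Mt t *m x t) in A C *.
set c := N (Mt t *m p) in C *.
set w := N (Mt t *m (x t - p)) in B C *.
have B2 : w <= op * (e / 2) by apply: le_trans B _; rewrite ler_wpM2l // ltW.
have D2 : op * d t <= op * (e / 2) by rewrite ler_wpM2l // ltW.
have -> : (1 - e) * op = op - op * (e / 2) - op * (e / 2).
  by rewrite mulrBl mul1r -addrA -opprD -mulrDr -splitr mulrC.
rewrite mulrBr mulr1 in A.
lra.
Qed.

Local Open Scope classical_set_scope.

Lemma cis_neq0 {R : realType} (x : R) : cis x != 0.
Proof.
apply/negP => /eqP h.
have c0 : cos x = 0 by move: h; rewrite /cis => -[].
have s0 : sin x = 0 by move: h; rewrite /cis => -[].
have := cos2Dsin2 x; rewrite c0 s0 expr0n /= addr0 => /eqP.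
by rewrite eq_sym oner_eq0.
Qed.

Lemma Q1_y0_neq0 {R : realType} {n : nat} (A : 'M[R[i]]_n) (y0 : 'cV[R[i]]_n)
  (p : nat) (lam : 'I_p -> R[i]) (d : 'I_p -> nat) (m : 'I_p -> nat -> nat)
  (v : 'I_p -> nat -> nat -> 'cV[R[i]]_n) (w : 'I_p -> nat -> nat -> 'rV[R[i]]_n) :
  jordan_basis A lam d m v w -> RLGE lam d m w y0 ->
  forall t, Q1 lam d m v w t *m y0 != 0.
Proof.
move=> [[_ _ mpos _ _] [_ bio]] [i0 [j0 [L1 jd mM hw]]] t.
set M1' := M1 lam d m in mM hw *.
have term : forall i (j : nat), (j < d i)%N ->
   w i0 j0 0%N *m ((cis (complex.Im (lam i) * t) *: (v i j 0%N *m w i j M1'.-1)) *m y0)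
   = ((i0 == i) && (j0 == j))%:R *: (cis (complex.Im (lam i) * t) *: (w i j M1'.-1 *m y0)).
  move=> i j jdi.
  rewrite -scalemxAl -scalemxAr !mulmxA.
  rewrite (bio i0 j0 0%N i j 0%N jd (mpos _ _ jd) jdi (mpos _ _ jdi)).
  rewrite mul_scalar_mx -scalemxAl andbT.
  by rewrite scalerA mulrC -scalerA.
have key : w i0 j0 0%N *m (Q1 lam d m v w t *m y0) =
           cis (complex.Im (lam i0) * t) *: (w i0 j0 M1'.-1 *m y0).
  rewrite /Q1 -/M1' mulmx_suml mulmx_sumr (bigD1 i0) //=.
  rewrite [X in _ + X]big1 ?addr0; last first.
    move=> i /andP [_ ii0]; rewrite mulmx_suml mulmx_sumr big1 // => j _.
    by rewrite (term i j (ltn_ord j)) (eq_sym i0 i) (negbTE ii0) /= scale0r.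
  rewrite mulmx_suml mulmx_sumr (bigD1 (Ordinal jd)) /=; last by rewrite mM.
  rewrite [X in _ + X]big1 ?addr0; first by rewrite (term i0 j0 jd) !eqxx /= scale1r.
  move=> j /andP [_ jj0].
  have hj : (j0 == j) = false.
    apply/negbTE; apply: contra jj0 => /eqP e; apply/eqP/val_inj; by rewrite /= e.
  by rewrite (term i0 j (ltn_ord j)) eqxx hj /= scale0r.
apply/negP => /eqP h.
move: key; rewrite h mulmx0 => /esym/eqP; rewrite scaler_eq0 (negbTE (cis_neq0 _)) /=.
by rewrite (negbTE hw).
Qed.

Local Open Scope classical_set_scope.
Section ReIm.
Context {R : realType}.
Implicit Types (a b : R[i]).

Lemma ReD a b : complex.Re (a + b) = complex.Re a + complex.Re b.
Proof. by case: a; case: b. Qed.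
Lemma ImD a b : complex.Im (a + b) = complex.Im a + complex.Im b.
Proof. by case: a; case: b. Qed.
Lemma ReN a : complex.Re (- a) = - complex.Re a.
Proof. by case: a. Qed.
Lemma ImN a : complex.Im (- a) = - complex.Im a.
Proof. by case: a. Qed.
Lemma ReB a b : complex.Re (a - b) = complex.Re a - complex.Re b.
Proof. by rewrite ReD ReN. Qed.
Lemma ImB a b : complex.Im (a - b) = complex.Im a - complex.Im b.
Proof. by rewrite ImD ImN. Qed.
Lemma ReM a b : complex.Re (a * b) = complex.Re a * complex.Re b - complex.Im a * complex.Im b.
Proof. by case: a => ? ?; case: b. Qed.
Lemma ImM a b : complex.Im (a * b) = complex.Re a * complex.Im b + complex.Im a * complex.Re b.
Proof. by case: a => ? ?; case: b. Qed.
Lemma Re0 : complex.Re (0 : R[i]) = 0. Proof. by []. Qed.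
Lemma Im0 : complex.Im (0 : R[i]) = 0. Proof. by []. Qed.

Lemma Re_sum (I : Type) (s : seq I) (P : pred I) (f : I -> R[i]) :
  complex.Re (\sum_(i <- s | P i) f i) = \sum_(i <- s | P i) complex.Re (f i).
Proof. by elim/big_rec2: _ => // i x y _ <-; rewrite ReD. Qed.
Lemma Im_sum (I : Type) (s : seq I) (P : pred I) (f : I -> R[i]) :
  complex.Im (\sum_(i <- s | P i) f i) = \sum_(i <- s | P i) complex.Im (f i).
Proof. by elim/big_rec2: _ => // i x y _ <-; rewrite ImD. Qed.

Lemma complex_ext a b : complex.Re a = complex.Re b -> complex.Im a = complex.Im b -> a = b.
Proof. by case: a => ? ?; case: b => ? ? /= -> ->. Qed.

Lemma natC (k : nat) : (k%:R : R[i]) = Complex k%:R 0.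
Proof.
elim: k => [//|k IH]; rewrite -addn1 !natrD IH !mulr1n.
by apply: complex_ext; rewrite /= ?addr0.
Qed.

Lemma invnatC (k : nat) : (k%:R^-1 : R[i]) = Complex k%:R^-1 0.
Proof.
have [->|k0] := eqVneq k 0%N; first by rewrite !invr0.
rewrite natC; apply: (@mulfI _ (Complex k%:R 0)).
  by rewrite -natC pnatr_eq0.
rewrite mulfV -?natC ?pnatr_eq0 //.
apply: complex_ext.
  by rewrite ReM natC /= mulr0 subr0 mulfV ?pnatr_eq0.
by rewrite ImM natC /= mulr0 mul0r addr0.
Qed.

End ReIm.

Notation CC R := (Num.NumField.clone R[i] _).

Lemma cvg_mx_ReIm {R : realType} {n : nat} (u : nat -> 'M[CC R]_n) (L : 'M[CC R]_n) :
  (forall i j, (fun N => complex.Re (u N i j)) @ \oo --> complex.Re (L i j)) ->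
  (forall i j, (fun N => complex.Im (u N i j)) @ \oo --> complex.Im (L i j)) ->
  u @ \oo --> L.
Proof.
move=> hre him; apply/cvg_ballP => eps eps0.
have [Ie Re0] : complex.Im eps = 0 /\ 0 < complex.Re eps.
  by move: eps0; rewrite ltcE /= => /andP [/eqP -> ->].
set r := complex.Re eps in Re0.
have r2 : 0 < r / 2 by rewrite divr_gt0.
have hR : forall ij : 'I_n * 'I_n, \forall N \near \oo,
   `|complex.Re (L ij.1 ij.2) - complex.Re (u N ij.1 ij.2)| < r / 2 /\
   `|complex.Im (L ij.1 ij.2) - complex.Im (u N ij.1 ij.2)| < r / 2.
  move=> [i j] /=; apply: filterI.
  - by move/cvgrPdist_lt: (hre i j) => /(_ _ r2).
  - by move/cvgrPdist_lt: (him i j) => /(_ _ r2).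
near=> N.
have hN : forall ij : 'I_n * 'I_n,
   `|complex.Re (L ij.1 ij.2) - complex.Re (u N ij.1 ij.2)| < r / 2 /\
   `|complex.Im (L ij.1 ij.2) - complex.Im (u N ij.1 ij.2)| < r / 2.
  by near: N; apply: filter_forall => ij; exact: hR.
split => // i j.
have [h1 h2] := hN (i, j).
rewrite /ball /= normc_def ltcE /= Ie eqxx /= -/r.
have := @cabs_le_ReIm R (L i j - u N i j).
rewrite /cabs.
have -> : ComplexField.Normc.normc (L i j - u N i j) =
    Num.sqrt (complex.Re (L i j - u N i j) ^+ 2 + complex.Im (L i j - u N i j) ^+ 2).
  by case: (L i j - u N i j).
move=> h; apply: le_lt_trans h _.
rewrite ReB ImB (splitr r); exact: ltrD.
Unshelve. all: by end_near.
Qed.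

Local Open Scope classical_set_scope.

Section ExpEntry.
Context {R : realType} {n : nat}.
Implicit Types (X : 'M[R[i]]_n).

Definition csum X : R := \sum_(i < n) \sum_(j < n) cabs (X i j).

Lemma csum_ge0 X : 0 <= csum X.
Proof. by apply: sumr_ge0 => i _; apply: sumr_ge0 => j _; apply: cabs_ge0. Qed.

Lemma col_le_csum X j : \sum_(l < n) cabs (X l j) <= csum X.
Proof.
apply: ler_sum => l _.
rewrite (bigD1 j) //= lerDl; apply: sumr_ge0 => k _; exact: cabs_ge0.
Qed.

Lemma pow_entry_bound X k i j : cabs ((X ^+ k) i j) <= csum X ^+ k.
Proof.
elim: k i j => [|k IH] i j.
  by rewrite !expr0 mxE; case: (i == j); rewrite ?mulr1n ?mulr0n ?cabs1 ?cabs0 ?ler01.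
rewrite exprSr -mulmxE mxE; apply: le_trans; first exact: cabs_sum.
apply: (@le_trans _ _ (\sum_(l < n) csum X ^+ k * cabs (X l j))).
  apply: ler_sum => l _; rewrite cabsM; apply: ler_wpM2r; [exact: cabs_ge0 | exact: IH].
rewrite -mulr_sumr exprSr; apply: ler_wpM2l; first by apply: exprn_ge0; exact: csum_ge0.
exact: col_le_csum.
Qed.

Definition Sx X (N : nat) : 'M[R[i]]_n := \sum_(k < N) (k`!%:R^-1 *: X ^+ k).

Definition zt X i j (k : nat) : R[i] := k`!%:R^-1 * (X ^+ k) i j.

Lemma Sx_entry X N i j : Sx X N i j = \sum_(0 <= k < N) zt X i j k.
Proof.
by rewrite /Sx summxE big_mkord; apply: eq_bigr => k _; rewrite mxE.
Qed.

Lemma cabs_invfact (k : nat) : cabs (k`!%:R^-1 : R[i]) = k`!%:R^-1.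
Proof. by rewrite invnatC cabs_real ger0_norm // invr_ge0. Qed.

Lemma zt_bound X i j k : cabs (zt X i j k) <= exp_coeff (csum X) k.
Proof.
rewrite /zt /exp_coeff /= cabsM cabs_invfact mulrC.
by apply: ler_wpM2r; [rewrite invr_ge0 | exact: pow_entry_bound].
Qed.

Lemma series_Re_cvg X i j : cvgn (series (fun k => complex.Re (zt X i j k))).
Proof.
apply: normed_cvg.
apply: (@series_le_cvg _ _ (exp_coeff (csum X))).
- by move=> k; exact: normr_ge0.
- by move=> k; apply: exp_coeff_ge0; exact: csum_ge0.
- by move=> k; apply: le_trans (cabs_Re _) (zt_bound _ _ _ _).
- exact: is_cvg_series_exp_coeff.
Qed.

Lemma series_Im_cvg X i j : cvgn (series (fun k => complex.Im (zt X i j k))).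
Proof.
apply: normed_cvg.
apply: (@series_le_cvg _ _ (exp_coeff (csum X))).
- by move=> k; exact: normr_ge0.
- by move=> k; apply: exp_coeff_ge0; exact: csum_ge0.
- by move=> k; apply: le_trans (cabs_Im _) (zt_bound _ _ _ _).
- exact: is_cvg_series_exp_coeff.
Qed.

Definition Lx X : 'M[CC R]_n := \matrix_(i, j)
  Complex (limn (series (fun k => complex.Re (zt X i j k))))
          (limn (series (fun k => complex.Im (zt X i j k)))).

Lemma Re_Sx X N i j : complex.Re (Sx X N i j) = series (fun k => complex.Re (zt X i j k)) N.
Proof. by rewrite Sx_entry Re_sum. Qed.
Lemma Im_Sx X N i j : complex.Im (Sx X N i j) = series (fun k => complex.Im (zt X i j k)) N.
Proof. by rewrite Sx_entry Im_sum. Qed.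

Lemma Sx_cvg X : (Sx X : nat -> 'M[CC R]_n) @ \oo --> Lx X.
Proof.
apply: cvg_mx_ReIm => i j.
  rewrite mxE /=.
  have -> : (fun N => complex.Re (Sx X N i j)) = series (fun k => complex.Re (zt X i j k)).
    by apply: funext => N; rewrite Re_Sx.
  exact: series_Re_cvg.
rewrite mxE /=.
have -> : (fun N => complex.Im (Sx X N i j)) = series (fun k => complex.Im (zt X i j k)).
  by apply: funext => N; rewrite Im_Sx.
exact: series_Im_cvg.
Qed.

Lemma expmx_Lx X : expmx X = Lx X.
Proof.
rewrite /expmx.
have h := cvg_lim (@norm_hausdorff _ _) (Sx_cvg X).
exact: h.
Qed.

Lemma expmx_Re_cvg X i j :
  (fun N => complex.Re (Sx X N i j)) @ \oo --> complex.Re (expmx X i j).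
Proof.
rewrite expmx_Lx mxE /=.
have -> : (fun N => complex.Re (Sx X N i j)) = series (fun k => complex.Re (zt X i j k)).
  by apply: funext => N; rewrite Re_Sx.
exact: series_Re_cvg.
Qed.

Lemma expmx_Im_cvg X i j :
  (fun N => complex.Im (Sx X N i j)) @ \oo --> complex.Im (expmx X i j).
Proof.
rewrite expmx_Lx mxE /=.
have -> : (fun N => complex.Im (Sx X N i j)) = series (fun k => complex.Im (zt X i j k)).
  by apply: funext => N; rewrite Im_Sx.
exact: series_Im_cvg.
Qed.

End ExpEntry.

Section CauchyId.
Context {F : numFieldType} {A : algType F}.

Lemma binom_exp (x y : A) (N : nat) : GRing.comm x y ->
  (N`!%:R^-1 : F) *: (x + y) ^+ N =
  \sum_(0 <= i < N.+1) ((i`!%:R^-1 : F) *: x ^+ i) * (((N - i)`!%:R^-1 : F) *: y ^+ (N - i)).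
Proof.
move=> cxy.
have cyx : GRing.comm y x by [].
rewrite addrC (exprDn_comm _ cyx) scaler_sumr big_mkord.
apply: eq_bigr => i _.
have iN : (i <= N)%N by rewrite -ltnS.
rewrite -scalerAl -scalerAr scalerA.
have -> : y ^+ (N - i) * x ^+ i = x ^+ i * y ^+ (N - i).
  by apply: commrX; apply/esym; apply: commrX.
have -> : forall v : A, v *+ 'C(N, i) = ('C(N, i)%:R : F) *: v.
  by move=> v; rewrite scaler_nat.
rewrite scalerA; congr (_ *: _).
have hb := bin_fact iN.
have f0 : (i`!%:R : F) != 0 by rewrite pnatr_eq0 -lt0n fact_gt0.
have g0 : ((N - i)`!%:R : F) != 0 by rewrite pnatr_eq0 -lt0n fact_gt0.
have h0 : (N`!%:R : F) != 0 by rewrite pnatr_eq0 -lt0n fact_gt0.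
apply: (mulfI h0); rewrite mulrA mulfV // mul1r.
rewrite -hb !natrM.
field.
by rewrite f0 g0.
Qed.

Lemma cauchy_id (x y : A) (N : nat) : GRing.comm x y ->
  \sum_(0 <= i < N) \sum_(0 <= j < N - i)
      ((i`!%:R^-1 : F) *: x ^+ i) * ((j`!%:R^-1 : F) *: y ^+ j)
  = \sum_(0 <= k < N) (k`!%:R^-1 : F) *: (x + y) ^+ k.
Proof.
move=> cxy; elim: N => [|N IH]; first by rewrite !big_geq.
rewrite [RHS]big_nat_recr //= -IH binom_exp //.
rewrite [LHS](@eq_big_nat _ _ _ 0 N.+1 _
   (fun i => \sum_(0 <= j < N - i) ((i`!%:R^-1 : F) *: x ^+ i) * ((j`!%:R^-1 : F) *: y ^+ j)
           + ((i`!%:R^-1 : F) *: x ^+ i) * (((N - i)`!%:R^-1 : F) *: y ^+ (N - i)))); last first.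
  move=> i /andP [_ iN]; rewrite subSn // big_nat_recr //.
rewrite big_split /= big_nat_recr //= subnn.
by rewrite [X in _ + X + _]big_geq // addr0.
Qed.

End CauchyId.

Local Open Scope classical_set_scope.

Lemma cvg_sum_seq {R : realType} (I : Type) (s : seq I) (f : I -> nat -> R) (l : I -> R) :
  (forall i, f i @ \oo --> l i) ->
  (fun N => \sum_(i <- s) f i N) @ \oo --> \sum_(i <- s) l i.
Proof.
move=> h; elim: s => [|a s IH].
  rewrite big_nil.
  have -> : (fun N => \sum_(i <- [::]) f i N) = (fun=> 0) by apply: funext => N; rewrite big_nil.
  exact: cvg_cst.
rewrite big_cons.
have -> : (fun N => \sum_(i <- a :: s) f i N) = f a \+ (fun N => \sum_(i <- s) f i N).
  by apply: funext => N; rewrite big_cons.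
exact: cvgD.
Qed.

Lemma lim_unique_bound {R : realType} (a B : nat -> R) (x y : R) :
  a @ \oo --> x -> B @ \oo --> 0 ->
  (forall N, (0 < N)%N -> `|a N - y| <= B N) -> x = y.
Proof.
move=> ha hB hb.
have : `|x - y| <= 0.
  apply: (@small0 R _ 1) => // e e0; rewrite mulr1.
  have e2 : 0 < e / 2 by rewrite divr_gt0.
  move/cvgrPdist_lt: ha => /(_ _ e2) ha.
  move/cvgrPdist_lt: hB => /(_ _ e2) hB.
  near \oo => N.
  have h1 : `|x - a N| < e / 2 by near: N.
  have h2 : `|0 - B N| < e / 2 by near: N.
  have N0 : (0 < N)%N by near: N; exact: nbhs_infty_gt.
  have := hb N N0.
  rewrite sub0r normrN in h2.
  move=> h3.
  have h4 : `|a N - y| < e / 2 by apply: le_lt_trans h3 (le_lt_trans (ler_norm _) h2).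
  apply: le_trans (ler_distD (a N) x y) _.
  by rewrite (splitr e) ltW // ltrD.
by rewrite normr_le0 subr_eq0 => /eqP.
Unshelve. all: by end_near.
Qed.

Local Open Scope classical_set_scope.

Section ExpInv.
Context {R : realType} {n : nat}.
Variable X : 'M[R[i]]_n.+1.

Definition fm (i j : nat) : 'M[R[i]]_n.+1 :=
  ((i`!%:R^-1 : R[i]) *: X ^+ i) * ((j`!%:R^-1 : R[i]) *: (- X) ^+ j).

Lemma Sx_prod N : Sx X N * Sx (- X) N = \sum_(0 <= i < N) \sum_(0 <= j < N) fm i j.
Proof.
rewrite /Sx mulr_suml big_mkord; apply: eq_bigr => i _.
by rewrite mulr_sumr big_mkord.
Qed.

Lemma Sx_zero N : Sx (0 : 'M[R[i]]_n.+1) N.+1 = 1.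
Proof.
rewrite /Sx big_ord_recl /= expr0 fact0 invr1 scale1r big1 ?addr0 //.
by move=> k _; rewrite expr0n /= scaler0.
Qed.

Lemma head_sum N : \sum_(0 <= i < N) \sum_(0 <= j < N - i) fm i j = Sx 0 N.
Proof.
have cX : GRing.comm X (- X) by apply: commrN; exact: commr_refl.
rewrite /fm (cauchy_id _ _ _ cX) subrr /Sx big_mkord //.
Qed.

Lemma tail_split N : Sx X N * Sx (- X) N - Sx 0 N =
   \sum_(0 <= i < N) \sum_(N - i <= j < N) fm i j.
Proof.
rewrite Sx_prod -head_sum -sumrB; apply: eq_bigr => i _.
rewrite (@big_cat_nat _ _ _ (N - i)) //= ?leq_subr //.
by rewrite addrC addrK.
Qed.

Lemma csumN : csum (- X) = csum X.
Proof.
rewrite /csum; apply: eq_bigr => i _; apply: eq_bigr => j _.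
by rewrite mxE cabsN.
Qed.

Let c := csum X.
Let e := exp_coeff c.

Lemma fm_entry_bound i j a b : cabs (fm i j a b) <= n.+1%:R * (e i * e j).
Proof.
rewrite /fm -mulmxE mxE; apply: le_trans; first exact: cabs_sum.
apply: (@le_trans _ _ (\sum_(l < n.+1) e i * e j)).
  apply: ler_sum => l _; rewrite !mxE cabsM.
  have h1 := zt_bound X a l i.
  have h2 := zt_bound (- X) l b j.
  rewrite csumN in h2.
  apply: ler_pM => //; [exact: cabs_ge0 | exact: cabs_ge0].
by rewrite sumr_const card_ord mulr_natl.
Qed.

Definition TR N := \sum_(0 <= i < N) \sum_(N - i <= j < N) e i * e j.

Lemma tail_entry_bound N a b :
  cabs ((Sx X N * Sx (- X) N - Sx 0 N) a b) <= n.+1%:R * TR N.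
Proof.
rewrite tail_split summxE /TR mulr_sumr; apply: le_trans; first exact: cabs_sum.
apply: ler_sum => i _; rewrite summxE mulr_sumr; apply: le_trans; first exact: cabs_sum.
apply: ler_sum => j _; exact: fm_entry_bound.
Qed.

Lemma real_split N : series e N * series e N = series (exp_coeff (c + c)) N + TR N.
Proof.
rewrite /series /= mulr_suml.
have cc : GRing.comm (c : R^o) c by [].
have h := @cauchy_id R R^o c c N cc.
have -> : \sum_(0 <= k < N) exp_coeff (c + c) k =
    \sum_(0 <= k < N) ((k`!%:R^-1 : R) *: ((c : R^o) + c) ^+ k).
  by apply: eq_bigr => k _; rewrite /exp_coeff /= mulrC.
rewrite -h /TR -big_split /=; apply: eq_bigr => i _.
rewrite mulr_sumr (@big_cat_nat _ _ _ (N - i)) //= ?leq_subr //.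
congr (_ + _); apply: eq_bigr => j _; rewrite /e /exp_coeff /=.
by rewrite [X in _ = X * _]mulrC [X in _ = _ * X]mulrC.
Qed.

End ExpInv.

Local Open Scope classical_set_scope.

Lemma entry_sub {R : realType} {n : nat} (P Q : 'M[R[i]]_n) i j : (P - Q) i j = P i j - Q i j.
Proof. by rewrite !mxE. Qed.

Section ExpInv2.
Context {R : realType} {n : nat}.
Variable X : 'M[R[i]]_n.+1.

Lemma prod_Re_cvg a b :
  (fun N => complex.Re ((Sx X N * Sx (- X) N) a b)) @ \oo -->
     complex.Re ((expmx X * expmx (- X)) a b).
Proof.
have -> : (fun N => complex.Re ((Sx X N * Sx (- X) N) a b)) =
   (fun N => \sum_(l <- index_enum 'I_n.+1)
       (complex.Re (Sx X N a l) * complex.Re (Sx (- X) N l b)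
        - complex.Im (Sx X N a l) * complex.Im (Sx (- X) N l b))).
  apply: funext => N; rewrite -mulmxE mxE Re_sum; apply: eq_bigr => l _.
  by rewrite ReM.
rewrite -mulmxE mxE Re_sum.
under eq_bigr do rewrite ReM.
apply: cvg_sum_seq => l.
apply: cvgB; apply: cvgM;
  by [apply: expmx_Re_cvg | apply: expmx_Im_cvg].
Qed.

Lemma prod_Im_cvg a b :
  (fun N => complex.Im ((Sx X N * Sx (- X) N) a b)) @ \oo -->
     complex.Im ((expmx X * expmx (- X)) a b).
Proof.
have -> : (fun N => complex.Im ((Sx X N * Sx (- X) N) a b)) =
   (fun N => \sum_(l <- index_enum 'I_n.+1)
       (complex.Re (Sx X N a l) * complex.Im (Sx (- X) N l b)
        + complex.Im (Sx X N a l) * complex.Re (Sx (- X) N l b))).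
  apply: funext => N; rewrite -mulmxE mxE Im_sum; apply: eq_bigr => l _.
  by rewrite ImM.
rewrite -mulmxE mxE Im_sum.
under eq_bigr do rewrite ImM.
apply: cvg_sum_seq => l.
apply: cvgD; apply: cvgM;
  by [apply: expmx_Re_cvg | apply: expmx_Im_cvg].
Qed.

Lemma expmx_inv : expmx X * expmx (- X) = 1.
Proof.
set c := csum X.
have hS : series (exp_coeff c) @ \oo --> expR c := is_cvg_series_exp_coeff c.
have hT : series (exp_coeff (c + c)) @ \oo --> expR (c + c) := is_cvg_series_exp_coeff (c + c).
have hB : (fun N => (n.+1%:R : R) * (series (exp_coeff c) N * series (exp_coeff c) N
             - series (exp_coeff (c + c)) N)) @ \oo -->
           (n.+1%:R : R) * (expR c * expR c - expR (c + c)).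
  exact: (cvgMl_tmp (cvgB (cvgM hS hS) hT)).
rewrite expRD subrr mulr0 in hB.
have bnd : forall N a b, (0 < N)%N ->
   cabs ((Sx X N * Sx (- X) N) a b - (1 : 'M[R[i]]_n.+1) a b) <=
   n.+1%:R * (series (exp_coeff c) N * series (exp_coeff c) N - series (exp_coeff (c + c)) N).
  move=> [//|N] a b _.
  rewrite -(Sx_zero N) -entry_sub.
  apply: le_trans (tail_entry_bound X N.+1 a b) _.
  by rewrite (real_split X N.+1) addrC addKr.
apply/matrixP => a b; apply: complex_ext.
  apply: (lim_unique_bound _ _ _ _ (prod_Re_cvg a b) hB) => N N0.
  rewrite -ReB; apply: le_trans (cabs_Re _) _; exact: bnd.
apply: (lim_unique_bound _ _ _ _ (prod_Im_cvg a b) hB) => N N0.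
rewrite -ImB; apply: le_trans (cabs_Im _) _; exact: bnd.
Qed.

End ExpInv2.


Local Open Scope classical_set_scope.
Lemma etA_y0_neq0 {R : realType} {n : nat} (A : 'M[R[i]]_n) (y0 : 'cV[R[i]]_n) :
  y0 != 0 -> forall t, etA A t *m y0 != 0.
Proof.
case: n A y0 => [|n] A y0 y00 t.
  by move: y00; rewrite (flatmx0 y0) eqxx.
apply/negP => /eqP h.
move/negP: y00; apply; apply/eqP.
set Y := Complex t 0 *: A.
have hi := expmx_inv (- Y).
(rewrite opprK in hi).
have hi' : expmx (- Y) *m expmx Y = 1%:M by exact: hi.
have h' : expmx Y *m y0 = 0 by (move: h; rewrite /etA).
have e1 : expmx (- Y) *m (expmx Y *m y0) = y0 by (rewrite mulmxA hi' mul1mx).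
have := congr1 (mulmx (expmx (- Y))) h'.
by rewrite e1 mulmx0.
Qed.

Local Close Scope classical_set_scope.
Local Open Scope ring_scope.

Theorem mainTheorem3 (R : realType) (n : nat) (A : 'M[R[i]]_n)
    (N : 'cV[R[i]]_n -> R) (y0 : 'cV[R[i]]_n) :
  is_vnorm N -> y0 != 0 ->
  max_limsup_eq1 N (fun z t => K3 N A y0 z t / K2 N A y0 t) /\
  (forall (p : nat) (lam : 'I_p -> R[i]) (d : 'I_p -> nat) (m : 'I_p -> nat -> nat)
      (v : 'I_p -> nat -> nat -> 'cV[R[i]]_n) (w : 'I_p -> nat -> nat -> 'rV[R[i]]_n),
    jordan_basis A lam d m v w ->
    RLGE lam d m w y0 ->
    max_limsup_eq1 N (fun z t => Kinf3 N (Q1 lam d m v w) y0 z t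
                                 / Kinf2 N (Q1 lam d m v w) y0 t)).
Proof.
move=> hN y00; split.
  have H := abstract_main N hN y0 (etA A) y00 (etA_y0_neq0 A y0 y00).
  rewrite /K3 /K2; exact: H.
move=> p lam d m v w hJ hR.
have H := abstract_main N hN y0 (Q1 lam d m v w) y00 (Q1_y0_neq0 A y0 p lam d m v w hJ hR).
rewrite /Kinf3 /Kinf2; exact: H.
Qed.
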